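(* Let $L$ be a precompact Hausdorff co-Heyting algebra, let $x\in\mathcal I^{!\wedge}(L)$, and let $r$ be the cofoundation rank of $x$ in the ordered set $\mathcal I^{!\wedge}(L)$. Then $\dim_{L^*}x^*=r=\operatorname{codim}_L x^{\vee}$, where $x^\vee=\bigwedge\{y\in L: y\not\le x\}$.
   Context: A co-Heyting algebra is a bounded distributive lattice $(L,0,1,\vee,\wedge)$ such that $a-b=\min\{c\in L: a\le b\vee c\}$ exists for all $a,b$. For an ideal $I$, $L/I$ is the quotient by $a\equiv_I b\iff(a-b)\vee(b-a)\in I$. For a bounded distributive lattice $M$: $\operatorname{Spec}M$ is its set of prime filters ordered by inclusion; height/coheight of a prime filter are its foundation rank and its foundation rank for the reverse order in $\operatorname{Spec}M$; $\operatorname{codim}_M a=\min\{\operatorname{height}\mathfrak p: a\in\mathfrak p\}$ ($+\infty$ if none) and $\dim_M a=\sup\{\operatorname{coheight}\mathfrak p: a\in\mathfrak p\}$ ($-\infty$ if none). $L^*$ is $L$ with the reverse order (a bounded distributive lattice), and $x^*$ is $x$ viewed as an element of $L^*$. $dL=\{a:\operatorname{codim}_La\ge d\}$. $L$ is Hausdorff if every nonzero element has finite codimension; precompact if $L/dL$ is finite for every positive integer $d$. $\mathcal I^{!\wedge}(L)$ is the set of completely meet irreducible elements: $x\ne1$ such that $\bigwedge A\le x$ implies $a\le x$ for some $a\in A$. Cofoundation rank in an ordered set is foundation rank for the reverse order. *)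

(* Defs.v *)
From HB Require Import structures.
From mathcomp Require Import all_boot all_order.
Set Implicit Arguments. Unset Strict Implicit. Unset Printing Implicit Defensive.
Import Order.TTheory.
Local Open Scope order_scope.

Section Defs.
Context {disp : Order.disp_t} (M : tbDistrLatticeType disp).

Definition is_codiff (a b c : M) : Prop :=
  a <= b `|` c /\ forall c' : M, a <= b `|` c' -> c <= c'.

Definition coHeyting : Prop := forall a b : M, exists c, is_codiff a b c.

Definition prime_filter (P : M -> Prop) : Prop :=
  [/\ P \top, ~ P \bot,
      (forall a b : M, a <= b -> P a -> P b),
      (forall a b : M, P a -> P b -> P (a `&` b))
    & (forall a b : M, P (a `|` b) -> P a \/ P b)].

Definition strict_incl (P Q : M -> Prop) : Prop :=
  (forall a, P a -> Q a) /\ exists a, Q a /\ ~ P a.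

End Defs.

(** Foundation rank (finite values) of x in the ordered set S w.r.t. a strict
    order lt:  [frank_le S lt x n] means the foundation rank of x is defined
    and <= n (equivalently: every strictly descending chain in S starting at
    x has at most n steps). *)
Fixpoint frank_le {T : Type} (S : T -> Prop) (lt : T -> T -> Prop)
    (x : T) (n : nat) : Prop :=
  match n with
  | 0 => forall y, S y -> ~ lt y x
  | n'.+1 => forall y, S y -> lt y x -> frank_le S lt y n'
  end.

Definition frank_eq {T : Type} (S : T -> Prop) (lt : T -> T -> Prop)
    (x : T) (n : nat) : Prop :=
  frank_le S lt x n /\ forall m, (m < n)%N -> ~ frank_le S lt x m.

Section Spec.
Context {disp : Order.disp_t} (M : tbDistrLatticeType disp).

Definition height_le (P : M -> Prop) (n : nat) : Prop :=
  frank_le (@prime_filter _ M) (@strict_incl _ M) P n.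
Definition height_eq (P : M -> Prop) (n : nat) : Prop :=
  frank_eq (@prime_filter _ M) (@strict_incl _ M) P n.
Definition coheight_le (P : M -> Prop) (n : nat) : Prop :=
  frank_le (@prime_filter _ M) (fun Q R => @strict_incl _ M R Q) P n.
Definition coheight_eq (P : M -> Prop) (n : nat) : Prop :=
  frank_eq (@prime_filter _ M) (fun Q R => @strict_incl _ M R Q) P n.

Definition codim_eq (a : M) (n : nat) : Prop :=
  (exists P, [/\ prime_filter P, P a & height_eq P n]) /\
  (forall P, prime_filter P -> P a -> forall m, (m < n)%N -> ~ height_le P m).

(** codim_M a >= d  (includes codim = +oo) *)
Definition codim_ge (a : M) (d : nat) : Prop :=
  forall P, prime_filter P -> P a -> forall m, (m < d)%N -> ~ height_le P m.

Definition dim_eq (a : M) (n : nat) : Prop :=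
  (exists P, [/\ prime_filter P, P a & coheight_eq P n]) /\
  (forall P, prime_filter P -> P a -> coheight_le P n).

Definition cong_mod (I : M -> Prop) (a b : M) : Prop :=
  exists c1 c2, [/\ is_codiff a b c1, is_codiff b a c2 & I (c1 `|` c2)].

Definition hausdorff : Prop :=
  forall a : M, a != \bot -> exists n, codim_eq a n.

(** precompact: L / dL is finite for every positive integer d,
    where dL = {a | codim a >= d} *)
Definition precompact : Prop :=
  forall d : nat, (0 < d)%N ->
    exists s : seq M, forall a : M, exists2 b, b \in s & cong_mod (fun c => codim_ge c d) a b.

Definition is_glb (A : M -> Prop) (m : M) : Prop :=
  (forall a, A a -> m <= a) /\ (forall m', (forall a, A a -> m' <= a) -> m' <= m).

Definition cmi (x : M) : Prop :=
  x != \top /\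
  forall (A : M -> Prop) (m : M), is_glb A m -> m <= x -> exists a, A a /\ a <= x.

End Spec.

(* Main.v *)
Require Import Defs.
From HB Require Import structures.
From mathcomp Require Import all_boot all_order.
From mathcomp Require classical_sets.
From Stdlib Require Import Classical.
Import Order.TTheory.
Local Open Scope order_scope.

Lemma frank_mono {T : Type} (S : T -> Prop) (lt : T -> T -> Prop) (x : T) (n m : nat) :
  (n <= m)%N -> frank_le S lt x n -> frank_le S lt x m.
Proof.
elim: n x m => [|n IH] x [|m] Hnm H //=.
- move=> y Sy lyx; by case: (H y Sy lyx).
- move=> y Sy lyx; exact: IH (H y Sy lyx).
Qed.

Section Main.
Context {disp : Order.disp_t} {L : tbDistrLatticeType disp}.

Lemma height_sub (P Q : L -> Prop) n :
  (forall a, P a -> Q a) -> height_le Q n -> height_le P n.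
Proof.
move=> PQ H.
have hs : forall y, strict_incl y P -> strict_incl y Q.
  move=> y [yP [w [Pw nyw]]]; split; first by move=> a /yP /PQ.
  by exists w; split => //; apply: PQ.
move: H; rewrite /height_le; case: n => [|n] /= H y Sy syP.
- exact: (H y Sy (hs _ syP)).
- exact: (H y Sy (hs _ syP)).
Qed.
Arguments height_sub {P Q n}.

Lemma height_mono (P : L -> Prop) n m : (n <= m)%N -> height_le P n -> height_le P m.
Proof. exact: frank_mono. Qed.
Arguments height_mono {P n m}.

Lemma descent (R : L -> Prop) n k : prime_filter R -> height_le R n -> ~ height_le R k ->
  exists Q, [/\ prime_filter Q, (forall a, Q a -> R a), height_le Q k.+1 & ~ height_le Q k].
Proof.
elim: n R => [|n IH] R pR hn nk.
- by case: nk; apply: frank_mono hn.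
- case: (classic (height_le R k.+1)) => hk1.
  + by exists R.
  + have [y [py sy nyk]] : exists y, [/\ prime_filter y, strict_incl y R & ~ height_le y k].
      apply: NNPP => hne; apply: hk1 => y py sy; apply: NNPP => nyk; apply: hne; by exists y.
    have [Q [pQ QR hQ nQ]] := IH y py (hn y py sy) nyk.
    exists Q; split=> // a /QR; case: sy => + _; apply.
Qed.
Arguments descent {R n k}.

(* prime filter theorem, in the form needed *)
Lemma star (R : L -> Prop) (a b c : L) : prime_filter R -> is_codiff a b c -> R c ->
  exists R', [/\ prime_filter R', (forall z, R' z -> R z), R' a & ~ R' b].
Proof.
case=> [Rt Rb Rup Rmeet Rjoin] [abc cmin] Rc.
pose D z := forall w, z <= b `|` w -> R w.
have Dup : forall z z', z <= z' -> D z -> D z'.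
  by move=> z z' zz' Dz w h; apply: Dz; apply: le_trans h.
have Da : D a.
  by move=> w /cmin cw; apply: Rup cw Rc.
pose good (X : L -> Prop) := [/\ X a, (forall z z', z <= z' -> X z -> X z'),
   (forall z z', X z -> X z' -> X (z `&` z')) & (forall z, X z -> D z)].
pose P (X : classical_sets.set L) := (forall z, ~ X z) \/ good X.
have [A [PA Amax]] : exists A, P A /\ (forall B, classical_sets.proper A B -> ~ P B).
  apply: classical_sets.Zorn_bigcup => F FP Ftot.
  case: (classic (exists z, classical_sets.bigcup F id z)) => [[z0 [X0 FX0 X0z0]]|ne]; last first.
    by left=> z hz; apply: ne; exists z.
  have gX0 : good X0 by case: (FP X0 FX0) => // /(_ z0).
  right; split.
  - by exists X0 => //; case: gX0.
  - move=> z z' zz' [X FX Xz]; exists X => //.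
    by case: (FP X FX) => [/(_ z)//|[_ Xup _ _]]; apply: Xup zz' Xz.
  - move=> z z' [X FX Xz] [X' FX' Xz'].
    case: (Ftot X X' FX FX') => [XX'|X'X].
    + exists X' => //; case: (FP X' FX') => [/(_ z')//|[_ _ Xm _]]; apply: Xm => //; exact: XX'.
    + exists X => //; case: (FP X FX) => [/(_ z)//|[_ _ Xm _]]; apply: Xm => //; exact: X'X.
  - move=> z [X FX Xz]; case: (FP X FX) => [/(_ z)//|[_ _ _ XD]]; exact: XD.
have gA : good A.
  case: PA => // A0; exfalso.
  apply: (Amax (fun z => a <= z)).
    split; first by move=> z /A0.
    by move=> h; apply: (A0 a); apply: h.
  right; split => //.
  - by move=> z z' zz' az; apply: le_trans zz'.
  - by move=> z z' az az'; rewrite lexI az az'.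
  - by move=> z az; apply: Dup az Da.
case: gA => [Aa Aup Ameet AD].
have nAb : ~ A b.
  move=> /AD /(_ \bot); rewrite joinx0 lexx => /(_ isT); exact: Rb.
have AR : forall z, A z -> R z.
  move=> z /AD /(_ z); apply; exact: leUr.
exists A; split=> //; split.
- by apply: Aup Aa; exact: lex1.
- by move=> /AD /(_ \bot); rewrite le0x => /(_ isT).
- exact: Aup.
- exact: Ameet.
- move=> u v Auv; apply: NNPP => /not_or_and [nu nv].
  have ext : forall t, ~ A t -> exists g, A g /\ ~ D (g `&` t).
    move=> t nt; apply: NNPP => hne.
    apply: (Amax (fun z => exists2 g, A g & g `&` t <= z)).
      split; first by move=> z Az; exists z => //; exact: leIl.
      by move=> h; apply: nt; apply: h; exists a => //; exact: leIr.
    right; split.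
    + by exists a => //; exact: leIl.
    + by move=> z z' zz' [g Ag gz]; exists g => //; apply: le_trans zz'.
    + move=> z z' [g Ag gz] [g' Ag' gz']; exists (g `&` g'); first exact: Ameet.
      rewrite lexI; apply/andP; split.
      * apply: le_trans gz; apply: leI2 => //; exact: leIl.
      * apply: le_trans gz'; apply: leI2 => //; exact: leIr.
    + move=> z [g Ag gz]; apply: Dup gz _; apply: NNPP => nD; apply: hne; by exists g.
  have [g1 [Ag1 nD1]] := ext u nu.
  have [g2 [Ag2 nD2]] := ext v nv.
  have [w1 [h1 nR1]] : exists w, g1 `&` u <= b `|` w /\ ~ R w.
    apply: NNPP => hne; apply: nD1 => w h; apply: NNPP => nw; apply: hne; by exists w.
  have [w2 [h2 nR2]] : exists w, g2 `&` v <= b `|` w /\ ~ R w.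
    apply: NNPP => hne; apply: nD2 => w h; apply: NNPP => nw; apply: hne; by exists w.
  have Ag : A ((g1 `&` g2) `&` (u `|` v)) := Ameet _ _ (Ameet _ _ Ag1 Ag2) Auv.
  have : R (w1 `|` w2).
    apply: (AD _ Ag); rewrite meetUr leUx; apply/andP; split.
    + apply: le_trans (leU2 (lexx b) (leUl w1 w2)).
      apply: le_trans h1; apply: leI2 => //; exact: leIl.
    + apply: le_trans (leU2 (lexx b) (leUr w2 w1)).
      apply: le_trans h2; apply: leI2 => //; exact: leIr.
  by case/Rjoin.
Qed.
Arguments star {R a b c}.

Lemma trace (Q : L -> Prop) (a b : L) d m : prime_filter Q -> height_le Q m -> (m < d)%N ->
  cong_mod (fun c => codim_ge c d) a b -> (Q a <-> Q b).
Proof.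
move=> pQ hQ md [c1 [c2 [[ab1 _] [ba2 _] I12]]].
case: (pQ) => [_ _ Qup _ Qjoin]; split => Qa; apply: NNPP => nQb.
- have Qc1 : Q c1 by case: (Qjoin _ _ (Qup _ _ ab1 Qa)).
  exact: (I12 Q pQ (Qup _ _ (leUl c1 c2) Qc1) m md hQ).
- have Qc2 : Q c2 by case: (Qjoin _ _ (Qup _ _ ba2 Qa)).
  exact: (I12 Q pQ (Qup _ _ (leUr c2 c1) Qc2) m md hQ).
Qed.
Arguments trace {Q a b d m}.

Lemma sep (z y : L) : coHeyting L -> hausdorff L -> ~ z <= y ->
  exists R, [/\ prime_filter R, (exists n, height_le R n), R z & ~ R y].
Proof.
move=> cH hD nzy.
have [c [zc cmin]] := cH z y.
have c0 : c != \bot.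
  apply/negP => /eqP c0; apply: nzy; by rewrite c0 joinx0 in zc.
have [n [[R0 [pR0 R0c [hR0 _]]] _]] := hD c c0.
have [R [pR RR0 Rz nRy]] := star pR0 (conj zc cmin) R0c.
exists R; split => //; exists n; exact: height_sub RR0 hR0.
Qed.
Arguments sep {z y}.

Lemma principal (P : L -> Prop) h : coHeyting L -> hausdorff L -> precompact L ->
  prime_filter P -> height_le P h ->
  exists p y, (forall u, P u <-> p <= u) /\ (forall z, ~ P z <-> z <= y).
Proof.
move=> cH hD pC pP hP.
have [s hs] := pC h.+2 isT.
case: (pP) => [Pt Pb Pup Pmeet Pjoin].
have [a [Pa amin]] : exists a, P a /\ forall b, b \in s -> P b -> a <= b.
  elim: s {hs} => [|b s [a [Pa amin]]]; first by exists \top.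
  case: (classic (P b)) => Pb'.
  - exists (a `&` b); split; first exact: Pmeet.
    move=> b'; rewrite in_cons => /orP [/eqP -> _|b's Pbb]; first exact: leIr.
    exact: le_trans (leIl _ _) (amin _ b's Pbb).
  - exists a; split => // b'; rewrite in_cons => /orP [/eqP -> //|]; exact: amin.
have [y [nPy ymax]] : exists y, ~ P y /\ forall b, b \in s -> ~ P b -> b <= y.
  elim: s {hs amin} => [|b s [y [nPy ymax]]]; first by exists \bot.
  case: (classic (P b)) => Pb'.
  - exists y; split => // b'; rewrite in_cons => /orP [/eqP -> //|]; exact: ymax.
  - exists (y `|` b); split; first by case/Pjoin.
    move=> b'; rewrite in_cons => /orP [/eqP -> _|b's nPb']; first exact: leUr.
    exact: le_trans (ymax _ b's nPb') (leUl _ _).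
have stepY : forall R, prime_filter R -> height_le R h.+1 -> ~ R y -> forall u, R u -> P u.
  move=> R pR hR nRy u Ru; apply: NNPP => nPu.
  have [b bs cub] := hs u.
  have Rb : R b by apply/(trace pR hR (ltnSn _) cub).
  have nPb : ~ P b by move=> Pb'; apply: nPu; apply/(trace pP hP (ltnW (ltnSn h.+1)) cub).
  apply: nRy; case: pR => _ _ Rup _ _; exact: Rup _ _ (ymax b bs nPb) Rb.
have propY : forall R, prime_filter R -> (exists n, height_le R n) -> ~ R y -> forall u, R u -> P u.
  move=> R pR [n hR] nRy u Ru.
  case: (classic (height_le R h.+1)) => hR1; first exact: stepY hR1 nRy u Ru.
  have nRh : ~ height_le R h by move=> H; apply: hR1; exact: (height_mono (leqnSn h) H).
  have [Q [pQ QR hQ nQ]] := descent pR hR nRh.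
  exfalso; apply: nRy.
  have [w [Qw nPw]] : exists w, Q w /\ ~ P w.
    apply: NNPP => hne; apply: nQ; apply: height_sub hP => w Qw; apply: NNPP => nPw; apply: hne; by exists w.
  apply: QR; apply: NNPP => nQy; exact: nPw (stepY Q pQ hQ nQy w Qw).
have propA : forall R, prime_filter R -> height_le R h.+1 -> R a -> forall u, P u -> R u.
  move=> R pR hR Ra u Pu; apply: NNPP => nRu.
  have [b bs cub] := hs u.
  have Pb' : P b by apply/(trace pP hP (ltnW (ltnSn h.+1)) cub).
  have nRb : ~ R b by move=> Rb; apply: nRu; apply/(trace pR hR (ltnSn _) cub).
  apply: nRb; case: pR => _ _ Rup _ _; exact: Rup _ _ (amin b bs Pb') Ra.
have [p [ayp pmin]] := cH a y.
have Pp : P p.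
  by case: (Pjoin _ _ (Pup _ _ ayp Pa)).
exists p, y; split.
- move=> u; split; last by move=> pu; exact: Pup _ _ pu Pp.
  move=> Pu; apply: NNPP => npu.
  have [R [pR [n hR] Rp nRu]] := sep cH hD npu.
  have [R' [pR' R'R R'a nR'y]] := star pR (conj ayp pmin) Rp.
  have hR' : height_le R' n := height_sub R'R hR.
  have R'P := propY R' pR' (ex_intro _ n hR') nR'y.
  have hR'1 : height_le R' h.+1 by exact: (height_mono (leqnSn h) (height_sub R'P hP)).
  exact: nRu (R'R _ (propA R' pR' hR'1 R'a u Pu)).
- move=> z; split.
  + move=> nPz; apply: NNPP => nzy.
    have [R [pR hR Rz nRy]] := sep cH hD nzy.
    exact: nPz (propY R pR hR nRy z Rz).
  + move=> zy Pz; apply: nPy; exact: Pup _ _ zy Pz.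
Qed.
Arguments principal {P h}.

Lemma cmi_prime (x : L) : cmi x -> prime_filter (fun z => ~ z <= x).
Proof.
case=> xt cx; split.
- by rewrite le1x => /eqP xt'; move: xt; rewrite xt' eqxx.
- by apply; exact: le0x.
- by move=> a b ab na bx; apply: na (le_trans ab bx).
- move=> a b na nb abx.
  have gl : is_glb (fun w => w = a \/ w = b) (a `&` b).
    split; first by move=> w [->|->]; [exact: leIl| exact: leIr].
    by move=> m' hm; rewrite lexI (hm a (or_introl erefl)) (hm b (or_intror erefl)).
  have [w [[->|->] wx]] := cx _ _ gl abx.
  + exact: na wx.
  + exact: nb wx.
- move=> a b nab; apply: NNPP => /not_or_and [/NNPP ax /NNPP bx].
  by apply: nab; rewrite leUx ax bx.
Qed.
Arguments cmi_prime {x}.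

Lemma principal_cmi (P : L -> Prop) p y : prime_filter P ->
  (forall u, P u <-> p <= u) -> (forall z, ~ P z <-> z <= y) ->
  cmi y /\ forall z, P z <-> ~ z <= y.
Proof.
move=> [Pt _ Pup _ _] hp hy.
have PU : forall z, P z <-> ~ z <= y.
  move=> z; split; first by move=> Pz /hy.
  by move=> nzy; apply: NNPP => /hy.
split => //; split.
- apply/negP => /eqP yt; move: Pt; rewrite PU yt; apply; exact: lexx.
- move=> A m [mlb mgr] my; apply: NNPP => hne.
  have pm : p <= m.
    apply: mgr => a Aa; apply/hp/PU => ay; apply: hne; by exists a.
  by move: (proj2 (hp m) pm); rewrite PU.
Qed.
Arguments principal_cmi {P p y}.

Lemma lt_strict (y z : L) : (y < z)%O -> strict_incl (fun w => ~ w <= z) (fun w => ~ w <= y).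
Proof.
move=> yz; split.
- by move=> w nwz wy; apply: nwz (le_trans wy (ltW yz)).
- exists z; split; last by apply; exact: lexx.
  by rewrite lt_geF.
Qed.
Arguments lt_strict {y z}.

Lemma F1 n (y : L) : cmi y -> height_le (fun z => ~ z <= y) n ->
  frank_le (@cmi _ L) (fun a b : L => b < a) y n.
Proof.
elim: n y => [|n IH] y cy H; rewrite /height_le /= in H *; move=> z cz yz.
- exact: (H _ (cmi_prime cz) (lt_strict yz)).
- exact: IH z cz (H _ (cmi_prime cz) (lt_strict yz)).
Qed.

Lemma F2 m (y : L) : coHeyting L -> hausdorff L -> precompact L -> cmi y ->
  (exists N, height_le (fun z => ~ z <= y) N) -> ~ height_le (fun z => ~ z <= y) m ->
  ~ frank_le (@cmi _ L) (fun a b : L => b < a) y m.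
Proof.
move=> cH hD pC.
elim: m y => [|m IH] y cy [N hN] nh.
- have [Q [pQ sQ]] : exists Q, prime_filter Q /\ strict_incl Q (fun z => ~ z <= y).
    apply: NNPP => hne; apply: nh => Q pQ sQ; apply: hne; by exists Q.
  case: (sQ) => QU [w [Uw nQw]].
  have [p [y' [hp hy]]] := principal cH hD pC pQ (height_sub QU hN).
  have [cy' PU] := principal_cmi pQ hp hy.
  have yy' : (y < y')%O.
    rewrite lt_neqAle; apply/andP; split.
    + apply/negP => /eqP e; apply: Uw; rewrite e; exact/hy.
    + apply/hy => Qy; exact: (QU _ Qy (lexx y)).
  move=> /= H; exact: H y' cy' yy'.
- have [Q [pQ sQ nQ]] : exists Q, [/\ prime_filter Q, strict_incl Q (fun z => ~ z <= y) & ~ height_le Q m].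
    apply: NNPP => hne; apply: nh => Q pQ sQ; apply: NNPP => nQ; apply: hne; by exists Q.
  case: (sQ) => QU [w [Uw nQw]].
  have [p [y' [hp hy]]] := principal cH hD pC pQ (height_sub QU hN).
  have [cy' PU] := principal_cmi pQ hp hy.
  have yy' : (y < y')%O.
    rewrite lt_neqAle; apply/andP; split.
    + apply/negP => /eqP e; apply: Uw; rewrite e; exact/hy.
    + apply/hy => Qy; exact: (QU _ Qy (lexx y)).
  move=> /= H; apply: (IH y' cy' _ _ (H y' cy' yy')).
  + exists N; apply: height_sub hN => z /PU /QU //.
  + move=> h'; apply: nQ; apply: height_sub h' => z /PU //.
Qed.

Lemma compl_prime_d (J : L^d -> Prop) : prime_filter J -> prime_filter (fun z : L => ~ J z).
Proof.
case=> [Jt Jb Jup Jmeet Jjoin]; split.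
- exact: Jb.
- by move=> h; apply: h; exact: Jt.
- move=> a b ab na Jb'; apply: na; exact: (Jup b a ab Jb').
- move=> a b na nb Jab; case: (Jjoin a b Jab); [exact: na| exact: nb].
- move=> a b nab; apply: NNPP => /not_or_and [/NNPP Ja /NNPP Jb'].
  exact: nab (Jmeet a b Ja Jb').
Qed.
Arguments compl_prime_d {J}.

Lemma compl_prime (P : L -> Prop) : prime_filter P -> prime_filter (fun z : L^d => ~ P z).
Proof.
case=> [Pt Pb Pup Pmeet Pjoin]; split.
- exact: Pb.
- by move=> h; apply: h; exact: Pt.
- move=> a b ab na Pb'; apply: na; exact: (Pup b a ab Pb').
- move=> a b na nb Pab; case: (Pjoin a b Pab); [exact: na| exact: nb].
- move=> a b nab; apply: NNPP => /not_or_and [/NNPP Pa /NNPP Pb'].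
  exact: nab (Pmeet a b Pa Pb').
Qed.
Arguments compl_prime {P}.

Lemma coheight_compl n : forall (J : L^d -> Prop),
  coheight_le J n <-> height_le (fun z : L => ~ J z) n.
Proof.
elim: n => [|n IH] J; rewrite /coheight_le /height_le /=; split.
- move=> H P' pP' [P'J [w [Jw nP'w]]].
  apply: (H _ (compl_prime pP')); split.
  + by move=> z Jz P'z; exact: P'J z P'z Jz.
  + by exists w.
- move=> H J' pJ' [JJ' [w [J'w nJw]]].
  apply: (H _ (compl_prime_d pJ')); split.
  + by move=> z nJ'z Jz; exact: nJ'z (JJ' z Jz).
  + by exists w; split => // h; apply: h.
- move=> H P' pP' [P'J [w [Jw nP'w]]].
  have s : strict_incl J (fun z : L^d => ~ P' z).
    split; first by move=> z Jz P'z; exact: P'J z P'z Jz.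
    by exists w.
  have := (IH _).1 (H _ (compl_prime pP') s).
  by apply: height_sub => z P'z; apply.
- move=> H J' pJ' [JJ' [w [J'w nJw]]].
  apply: (IH _).2; apply: (H _ (compl_prime_d pJ')); split.
  + by move=> z nJ'z Jz; exact: nJ'z (JJ' z Jz).
  + by exists w; split => // h; apply: h.
Qed.

Lemma ex_min (Q : nat -> Prop) : (exists n, Q n) -> exists n, Q n /\ forall m, (m < n)%N -> ~ Q m.
Proof.
move=> [n Qn]; apply: NNPP => hne.
suff H : forall k m, (m <= k)%N -> ~ Q m.
  exact: (H n n (leqnn n) Qn).
elim=> [|k IH] m mk Qm; apply: hne; exists m; split => // m' m'm Qm'.
- by move: mk m'm; rewrite leqn0 => /eqP ->.
- exact: IH m' (leq_trans m'm mk) Qm'.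
Qed.

End Main.
Arguments height_sub {disp L} {P Q n}.
Arguments height_mono {disp L} {P n m}.
Arguments descent {disp L} {R n k}.
Arguments star {disp L} {R a b c}.
Arguments trace {disp L} {Q a b d m}.
Arguments sep {disp L} {z y}.
Arguments principal {disp L} {P h}.
Arguments cmi_prime {disp L} {x}.
Arguments principal_cmi {disp L} {P p y}.
Arguments lt_strict {disp L} {y z}.
Arguments compl_prime_d {disp L} {J}.
Arguments compl_prime {disp L} {P}.
Arguments ex_min {Q}.
Arguments F1 {disp L} {n y}.
Arguments F2 {disp L} {m y}.

Theorem proposition6p8 (disp : Order.disp_t) (L : tbDistrLatticeType disp) (x : L) :
  coHeyting L -> hausdorff L -> precompact L -> cmi x ->
  exists r : nat,
    [/\ frank_eq (@cmi _ L) (fun y z : L => z < y) x r,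
        dim_eq (x : L^d) r
      & exists xv : L, is_glb (fun y : L => ~ (y <= x)) xv /\ codim_eq xv r].
Proof.
move=> cH hD pC cx.
have pU := cmi_prime cx.
have finU : exists n, height_le (fun z : L => ~ z <= x) n.
  apply: NNPP => hne.
  have gl : is_glb (fun z : L => ~ z <= x) \bot.
    split; first by move=> a _; exact: le0x.
    move=> m' hm; apply: NNPP => nm.
    have m0 : m' != \bot by apply/negP => /eqP e; apply: nm; rewrite e.
    have [n [[R0 [pR0 R0m [hR0 _]]] _]] := hD m' m0.
    apply: hne; exists n; apply: height_sub hR0 => z Uz.
    case: pR0 => _ _ Rup _ _; exact: Rup _ _ (hm z Uz) R0m.
  have [a [Ua ax]] := cx.2 _ _ gl (le0x x).
  exact: Ua ax.
have [r [hUr minr]] := ex_min finU.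
have [p [y [hp hy]]] := principal cH hD pC pU hUr.
exists r; split.
- split; first exact: F1 cx hUr.
  move=> m mr; apply: (F2 cH hD pC cx (ex_intro _ r hUr) (minr m mr)).
- split.
  + exists (fun z : L^d => (z : L) <= x); split.
    * split.
      -- exact: le0x.
      -- by move=> h; case: pU => + _ _ _ _; apply.
      -- by move=> a b; rewrite leEdual => ab ax; exact: le_trans ab ax.
      -- by move=> a b ax bx; rewrite meetEdual leUx ax bx.
      -- move=> a b; rewrite joinEdual => abx; apply: NNPP => /not_or_and [na nb].
         by case: pU => _ _ _ + _; move/(_ a b na nb); apply.
    * exact: lexx.
    * split; first by apply/coheight_compl.
      by move=> m mr /coheight_compl; exact: minr.
  + move=> J pJ Jx; apply/coheight_compl.
    apply: height_sub hUr => z nJz zx; apply: nJz.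
    by case: pJ => _ _ Jup _ _; exact: Jup x z zx Jx.
- exists p; split.
  + split; first by move=> a /hp.
    by move=> m' hm; apply: hm; exact: (proj2 (hp p) (lexx p)).
  + split.
    * exists (fun z : L => ~ z <= x); split => //; first by exact: (proj2 (hp p) (lexx p)).
    * move=> P pP Pp m mr hm; apply: (minr m mr).
      apply: height_sub hm => u /hp pu.
      by case: pP => _ _ Pup _ _; exact: Pup _ _ pu Pp.
Qed.
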